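(* Let $T=([d],E)$ be a rooted tree, let $\{r_e\}_{e\in E}$ be positive integers, and let $p:\prod_{k=1}^d[n_k]\to\mathbb{R}$. Suppose that for every edge $w\to k$ of $T$ (i.e. $k=\mathcal{P}(w)$) there are $\Phi_{w\to k}:\prod_{i\in\mathcal{L}(w)\cup\{w\}}[n_i]\times[r_{(w,k)}]\to\mathbb{R}$ and $\Psi_{w\to k}:[r_{(w,k)}]\times\prod_{i\in\mathcal{R}(w)}[n_i]\to\mathbb{R}$ with $$p(x_1,\dots,x_d)=\sum_{\alpha_{(w,k)}=1}^{r_{(w,k)}}\Phi_{w\to k}(x_{\mathcal{L}(w)\cup w},\alpha_{(w,k)})\,\Psi_{w\to k}(\alpha_{(w,k)},x_{\mathcal{R}(w)}),$$ where the unfolding matrix $p(x_{\mathcal{L}(w)\cup w};x_{\mathcal{R}(w)})$ has rank exactly $r_{(w,k)}$ (so that the unfoldings $\Phi_{w\to k}(x_{\mathcal{L}(w)\cup w};\alpha_{(w,k)})$ and $\Psi_{w\to k}(\alpha_{(w,k)};x_{\mathcal{R}(w)})$ have full column rank, resp. full row rank, $r_{(w,k)}$). For a non-leaf $k$ define $$\Phi_{\mathcal{C}(k)\to k}(x_{\mathcal{L}(k)},\alpha_{(k,\mathcal{C}(k))})=\prod_{w\in\mathcal{C}(k)}\Phi_{w\to k}(x_{\mathcal{L}(w)\cup w},\alpha_{(k,w)}).$$ Consider, for $k=1,\dots,d$, the following linear equations (Core Determining Equations) in the unknown $G_k:[n_k]\times\prod_{w\in\mathcal{N}(k)}[r_{(w,k)}]\to\mathbb{R}$: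 - if $k$ is a leaf: $G_k(x_k,\alpha_{(k,\mathcal{P}(k))})=\Phi_{k\to\mathcal{P}(k)}(x_k,\alpha_{(k,\mathcal{P}(k))})$; - if $k$ is the root: $\sum_{\alpha_{(k,\mathcal{C}(k))}}\Phi_{\mathcal{C}(k)\to k}(x_{\mathcal{L}(k)},\alpha_{(k,\mathcal{C}(k))})\,G_k(x_k,\alpha_{(k,\mathcal{N}(k))})=p(x_1,\dots,x_d)$ for all $x$; - otherwise: $\sum_{\alpha_{(k,\mathcal{C}(k))}}\Phi_{\mathcal{C}(k)\to k}(x_{\mathcal{L}(k)},\alpha_{(k,\mathcal{C}(k))})\,G_k(x_k,\alpha_{(k,\mathcal{N}(k))})=\Phi_{k\to\mathcal{P}(k)}(x_{\mathcal{L}(k)\cup k},\alpha_{(k,\mathcal{P}(k))})$ for all $x_{\mathcal{L}(k)\cup k},\alpha_{(k,\mathcal{P}(k))}$. Then each of these equations has a unique solution $G_k$ (it is solvable exactly, and the solution is unique), and $p$ admits a TTNS ansatz over the cores $\{G_k\}_{k=1}^d$, i.e. $$p(x_1,\dots,x_d)=\sum_{\alpha_e\in[r_e],\,e\in E}\ \prod_{k=1}^d G_k\big(x_k,\alpha_{(k,\mathcal{N}(k))}\big).$$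
   Context: $T=([d],E)$ is a tree on vertex set $[d]=\{1,\dots,d\}$ with a distinguished root. For a node $k$: $\mathcal{C}(k)$ is its set of children, $\mathcal{P}(k)$ its parent (empty for the root), $\mathcal{N}(k)=\mathcal{C}(k)\cup\mathcal{P}(k)$ its neighbors, $\mathcal{L}(k)$ the set of proper descendants of $k$, and $\mathcal{R}(k)=[d]\setminus(\mathcal{L}(k)\cup\{k\})$ the set of non-descendants. Edges are undirected; $(w,k)$ and $(k,w)$ denote the same edge, and $w\to k$ indicates that $k$ is the parent of $w$. Each variable $x_i$ ranges over $[n_i]$. For $\mathcal{S}=\{i_1,\dots,i_m\}\subset[d]$, $x_{\mathcal{S}}=(x_{i_1},\dots,x_{i_m})$, and $x_{\mathcal{S}\cup k}:=x_{\mathcal{S}\cup\{k\}}$; each edge $e$ carries an index $\alpha_e\in[r_e]$, and $\alpha_{(k,\mathcal{S})}=(\alpha_{(k,i)})_{i\in\mathcal{S}}$ for a set $\mathcal{S}$ of neighbors of $k$. For a tensor $f$ and a partition $\mathcal{U}\cup\mathcal{V}$ of its index set, $f(x_{\mathcal{U}};x_{\mathcal{V}})$ denotes the unfolding matrix with rows indexed by $x_{\mathcal{U}}$ and columns by $x_{\mathcal{V}}$. *)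

(* Defs.v *)
From HB Require Import structures.
From mathcomp Require Import all_boot all_order all_algebra.
Set Implicit Arguments. Unset Strict Implicit. Unset Printing Implicit Defensive.
Import Order.TTheory GRing.Theory Num.Theory.
Local Open Scope ring_scope.

(* Vertices of the tree are 'I_d; the tree is given by a parent function
   [par] (par v = Some u means u = P(v), i.e. v -> u), with distinguished root. *)

Section TreeDefs.
Variable d : nat.
Variable par : 'I_d -> option 'I_d.

Definition is_rooted_tree (root : 'I_d) : Prop :=
  par root = None /\ (forall v, v != root -> par v != None) /\
  exists h : 'I_d -> nat, forall v u, par v = Some u -> (h u < h v)%N.

Definition children (k : 'I_d) : {set 'I_d} := [set w | par w == Some k].
(* L(k): proper descendants (ancestor chains in a d-vertex tree have < d steps) *)
Definition desc (k : 'I_d) : {set 'I_d} :=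
  [set w | [exists m : 'I_d, iter m.+1 (obind par) (Some w) == Some k]].
Definition nondesc (k : 'I_d) : {set 'I_d} := ~: (k |: desc k).
Definition is_leaf (k : 'I_d) : bool := children k == set0.

(* Edges of the tree, each identified with its child endpoint w (edge w -> P(w)). *)
Definition edge := {w : 'I_d | par w != None}.
End TreeDefs.

Definition asg_merge (d : nat) (n : 'I_d -> nat) (S : {set 'I_d})
  (x y : {dffun forall i : 'I_d, 'I_(n i)}) : {dffun forall i : 'I_d, 'I_(n i)} :=
  [ffun i => if i \in S then x i else y i].

Definition frank (R : fieldType) (I J : finType) (A : I -> J -> R) : nat :=
  \rank (\matrix_(i < #|I|, j < #|J|) A (enum_val i) (enum_val j)).

Section CoreEq.
Variable R : realFieldType.
Variable d : nat.
Variable par : 'I_d -> option 'I_d.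
Variable root : 'I_d.
Variable n : 'I_d -> nat.
Variable r : edge par -> nat.
Variable p : {dffun forall i : 'I_d, 'I_(n i)} -> R.
Variable Phi : forall e : edge par, {dffun forall i : 'I_d, 'I_(n i)} -> 'I_(r e) -> R.

Definition agree_off (k : 'I_d) (a a' : {dffun forall e : edge par, 'I_(r e)}) : bool :=
  [forall e : edge par, (par (sval e) != Some k) ==> (a' e == a e)].

Definition core_dep (k : 'I_d)
  (Gk : 'I_(n k) -> {dffun forall e : edge par, 'I_(r e)} -> R) : Prop :=
  forall xk (a a' : {dffun forall e : edge par, 'I_(r e)}),
    (forall e : edge par, (sval e == k) || (par (sval e) == Some k) -> a e = a' e) ->
    Gk xk a = Gk xk a'.

Definition contract (k : 'I_d)
  (Gk : 'I_(n k) -> {dffun forall e : edge par, 'I_(r e)} -> R)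
  (x : {dffun forall i : 'I_d, 'I_(n i)}) (a : {dffun forall e : edge par, 'I_(r e)}) : R :=
  \sum_(a' | agree_off k a a')
     (\prod_(e : edge par | par (sval e) == Some k) @Phi e x (a' e)) * Gk (x k) a'.

(* Phi_{k -> P(k)}(x_{L(k) u k}, alpha_(k,P(k))) for non-root k (0 at the root, unused) *)
Definition phi_up (k : 'I_d) (x : {dffun forall i : 'I_d, 'I_(n i)})
  (a : {dffun forall e : edge par, 'I_(r e)}) : R :=
  if (insub k : option (edge par)) is Some e then @Phi e x (a e) else 0.

Definition CDE (k : 'I_d)
  (Gk : 'I_(n k) -> {dffun forall e : edge par, 'I_(r e)} -> R) : Prop :=
  if k == root then forall (x : {dffun forall i : 'I_d, 'I_(n i)}) (a : {dffun forall e : edge par, 'I_(r e)}), contract Gk x a = p x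
  else if is_leaf par k then forall (x : {dffun forall i : 'I_d, 'I_(n i)}) (a : {dffun forall e : edge par, 'I_(r e)}), Gk (x k) a = phi_up k x a
  else forall (x : {dffun forall i : 'I_d, 'I_(n i)}) (a : {dffun forall e : edge par, 'I_(r e)}), contract Gk x a = phi_up k x a.
End CoreEq.

(* Main.v *)
Require Import Defs.
From HB Require Import structures.
From mathcomp Require Import all_boot all_order all_algebra ring zify.
From Stdlib Require Import ClassicalEpsilon.
Import Order.TTheory GRing.Theory Num.Theory.
Set Implicit Arguments. Unset Strict Implicit. Unset Printing Implicit Defensive.

Section Tree.
Variables (d : nat) (par : 'I_d -> option 'I_d) (root : 'I_d) (h : 'I_d -> nat).
Hypothesis Hroot : par root = None.
Hypothesis Hpar : forall v, v != root -> par v != None.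
Hypothesis Hh : forall v u, par v = Some u -> (h u < h v)%N.

Definition up m v := iter m (obind par) (Some v).
Definition anc v u := exists j, up j.+1 v = Some u.

Lemma iter_None m : iter m (obind par) None = None.
Proof. by elim: m => //= m ->. Qed.

Lemma up_h j v u : up j.+1 v = Some u -> (h u < h v)%N.
Proof.
elim: j u => [|j IH] u; first exact: Hh.
have -> : up j.+2 v = obind par (up j.+1 v) by [].
case E: (up j.+1 v) => [w|] //= Hw.
have hw := IH w E.
exact: (ltn_trans (Hh Hw) hw).
Qed.

Lemma anc_h v u : anc v u -> (h u < h v)%N.
Proof. by case=> j /up_h. Qed.

Lemma anc_irr v : ~ anc v v.
Proof. by move/anc_h; rewrite ltnn. Qed.

Lemma up_add m1 m2 v : up (m1 + m2) v = iter m1 (obind par) (up m2 v).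
Proof. by rewrite /up iterD. Qed.

Lemma anc_trans v w u : anc v w -> anc w u -> anc v u.
Proof.
case=> j1 H1 [j2 H2]; exists (j2 + j1.+1).
by rewrite -addSn up_add H1.
Qed.

Lemma anc_par v u : par v = Some u -> anc v u.
Proof. by move=> H; exists 0. Qed.

Lemma anc_first v u : anc v u -> par v = Some u \/ exists w, par v = Some w /\ anc w u.
Proof.
case=> j; rewrite /up iterSr /=.
case E: (par v) => [w|]; last by rewrite iter_None.
case: j => [|j] /= H; first by left; case: H => ->.
by right; exists w; split => //; exists j.
Qed.

Lemma anc_last v u : anc v u -> exists w, par w = Some u /\ (w = v \/ anc v w).
Proof.
case=> j; rewrite /up /=.
case E: (iter j (obind par) (Some v)) => [w|] //= H.
exists w; split => //; case: j E => [|j] /= E; first by left; case: E.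
by right; exists j.
Qed.

Lemma anc_cmp v w w' : anc v w -> anc v w' -> w = w' \/ anc w w' \/ anc w' w.
Proof.
have key : forall j j' w w', up j.+1 v = Some w -> up j'.+1 v = Some w' ->
  (j < j')%N -> anc w w'.
  move=> j j' x x' Hx Hx' ltjj'.
  exists (j' - j).-1.
  have e : j'.+1 = (j' - j).-1.+1 + j.+1 by rewrite prednK ?subn_gt0 // addnS subnK // ltnW.
  by rewrite e up_add Hx in Hx'.
case=> j Hj [j' Hj'].
case: (ltngtP j j') => c.
- by right; left; exact: key Hj Hj' c.
- by right; right; exact: key Hj' Hj c.
- by left; move: Hj; rewrite c Hj' => -[].
Qed.

Lemma up_bound j v u : up j v = Some u -> (j < d)%N.
Proof.
move=> Hj.
pose c i := odflt v (up i v).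
have Hs : forall i, (i <= j)%N -> up i v = Some (c i).
  move=> i lij; rewrite /c; case E: (up i v) => [w|] //.
  move: Hj; rewrite -(subnK lij) up_add E iter_None //.
have Hlt : forall i i', (i < i' <= j)%N -> (h (c i') < h (c i))%N.
  move=> i i' /andP[lii' li'j].
  have := Hs _ li'j.
  rewrite -(subnK (ltnW lii')) up_add (Hs i (ltnW (leq_trans lii' li'j))).
  have -> : i' - i = (i' - i).-1.+1 by rewrite prednK // subn_gt0.
  exact: up_h.
pose f (i : 'I_j.+1) : 'I_d := c i.
have finj : injective f.
  move=> i i' /= E; apply/val_inj/eqP; rewrite /f in E.
  case: (ltngtP i i') => // c'.
  - by have := Hlt i i'; rewrite c' -ltnS ltn_ord E ltnn => /(_ erefl).
  - by have := Hlt i' i; rewrite c' -ltnS ltn_ord E ltnn => /(_ erefl).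
by have := leq_card f finj; rewrite !card_ord.
Qed.

Lemma in_desc w k : (w \in desc par k) <-> anc w k.
Proof.
rewrite inE; split.
  by case/existsP=> m /eqP H; exists m.
case=> j H; have lt := up_bound H.
by apply/existsP; exists (Ordinal (ltnW lt)); apply/eqP.
Qed.

Definition S k := k |: desc par k.

Lemma reach_root v : v != root -> anc v root.
Proof.
have : forall m v, (h v < m)%N -> v != root -> anc v root.
  elim=> // m IH u hu nr.
  case E: (par u) (Hpar nr) => [w|] // _.
  case: (eqVneq w root) => [<-|wr]; first exact: anc_par.
  apply: anc_trans (anc_par E) (IH w _ wr).
  by have := Hh E; move=> /leq_trans; apply.
by move=> H; apply: (H (h v).+1).
Qed.

Lemma frontier (K : {set 'I_d}) u : root \in K -> u \notin K ->
  exists v w, [/\ v \notin K, w \in K & par v = Some w].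
Proof.
have : forall m u, (h u < m)%N -> root \in K -> u \notin K ->
  exists v w, [/\ v \notin K, w \in K & par v = Some w].
  elim=> // m IH x hx rK xK.
  have nr : x != root by apply: contraNneq xK => ->.
  case E: (par x) (Hpar nr) => [w|] // _.
  case: (boolP (w \in K)) => wK; first by exists x, w.
  apply: (IH w) => //; by have := Hh E; move=> /leq_trans; apply.
by move=> H; apply: (H (h u).+1).
Qed.

Lemma desc_child v k : v \in desc par k <-> exists w, par w = Some k /\ v \in S w.
Proof.
split.
  move/in_desc; case/anc_last=> w [pw [<-|avw]]; exists w; split => //; rewrite !in_setU1 ?eqxx //.
  by apply/orP; right; apply/in_desc.
case=> w [pw]; rewrite !in_setU1 => /orP[/eqP->|]; first exact/in_desc/anc_par.
move/in_desc => a; apply/in_desc; apply: anc_trans a (anc_par pw).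
Qed.

Lemma no_anc_sib w w' k : par w = Some k -> par w' = Some k -> ~ anc w w'.
Proof.
move=> pw pw' /anc_first [|[x [px axw']]].
  by rewrite pw => -[E]; subst; have := anc_par pw'; apply: anc_irr.
rewrite pw in px; case: px => E; subst x.
by apply: (@anc_irr k); apply: anc_trans axw' (anc_par pw').
Qed.

Lemma sib_disj w w' k v : par w = Some k -> par w' = Some k ->
  v \in S w -> v \in S w' -> w = w'.
Proof.
move=> pw pw' /setU1P[E1|/in_desc a1] /setU1P[E2|/in_desc a2].
- by rewrite -E1 -E2.
- by subst v; case: (no_anc_sib pw pw' a2).
- by subst v; case: (no_anc_sib pw' pw a1).
- case: (anc_cmp a1 a2) => [//|[]] a.
  + by case: (no_anc_sib pw pw' a).
  + by case: (no_anc_sib pw' pw a).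
Qed.

Lemma par_notin k w : par w = Some k -> k \notin S w.
Proof.
move=> pw; rewrite !in_setU1; apply/orP => -[/eqP E|/in_desc a].
  by subst; apply: (@anc_irr w); apply: anc_par.
by apply: (@anc_irr k); apply: anc_trans a (anc_par pw).
Qed.

Lemma child_sub k w : par w = Some k -> {subset S w <= desc par k}.
Proof. by move=> pw v vS; apply/desc_child; exists w. Qed.

Lemma par_neq w k : par w = Some k -> w != k.
Proof. by move=> pw; apply/eqP => E; subst; apply: (@anc_irr k); apply: anc_par. Qed.

End Tree.

Local Open Scope ring_scope.

Section Upd.
Variables (I : finType) (T : I -> Type).
Definition updf (f : {dffun forall i : I, T i}) (i : I) (v : T i) : {dffun forall i : I, T i} :=
  [ffun j => match i =P j with ReflectT H => eq_rect i T v j H | ReflectF _ => f j end].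
Arguments updf f i v : clear implicits.
Lemma updf_same f i v : updf f i v i = v.
Proof. rewrite ffunE; case: eqP => // H; by rewrite (eq_axiomK H). Qed.
Lemma updf_other f i v j : j != i -> updf f i v j = f j.
Proof. by rewrite ffunE => ji; case: eqP => // E; rewrite E eqxx in ji. Qed.
Lemma updf_id f i : updf f i (f i) = f.
Proof.
apply/ffunP => j; case: (eqVneq j i) => [->|ji]; first by rewrite updf_same.
by rewrite updf_other.
Qed.
End Upd.

Lemma disjP (T : finType) (A B : {set T}) :
  reflect (forall x, x \in A -> x \in B -> False) [disjoint A & B].
Proof.
rewrite disjoints_subset; apply: (iffP subsetP) => H x xA.
  by move=> xB; have := H x xA; rewrite inE xB.
by rewrite inE; apply/negP; apply: H.
Qed.

Section Asg.
Variables (R : comRingType) (E : finType) (r : E -> nat).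
Local Notation A := {dffun forall e : E, 'I_(r e)}.

Definition agr (U : {set E}) (a a' : A) : bool := [forall e, (e \notin U) ==> (a' e == a e)].

Lemma agrP (U : {set E}) (a a' : A) : reflect (forall e, e \notin U -> a' e = a e) (agr U a a').
Proof.
apply: (iffP forallP) => H e; first by move=> eU; have := H e; rewrite eU => /eqP.
by apply/implyP => /H ->.
Qed.

Lemma agr_refl (U : {set E}) (a : A) : agr U a a.
Proof. by apply/agrP. Qed.

Lemma agr0 (a a' : A) : agr set0 a a' = (a' == a).
Proof.
apply/agrP/eqP => [H|->] //; apply/ffunP => e; apply: H; by rewrite inE.
Qed.

Lemma agrT (a a' : A) : agr setT a a'.
Proof. by apply/agrP => e; rewrite inE. Qed.

Lemma sum_agr0 (F : A -> R) (a : A) : \sum_(a' | agr set0 a a') F a' = F a.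
Proof. by rewrite (big_pred1 a) // => a'; rewrite /= agr0. Qed.

Definition amerge (U : {set E}) (a b : A) : A := [ffun e => if e \in U then a e else b e].

Lemma sum_agrU (U1 U2 : {set E}) (F : A -> R) (a : A) : [disjoint U1 & U2] ->
  \sum_(a' | agr (U1 :|: U2) a a') F a' =
  \sum_(a1 | agr U1 a a1) \sum_(a2 | agr U2 a1 a2) F a2.
Proof.
move=> dis.
rewrite (partition_big (fun a' => amerge U1 a' a) (agr U1 a)); last first.
  by move=> a' _; apply/agrP => e eU; rewrite ffunE (negbTE eU).
apply: eq_bigr => a1 /agrP Ha1; apply: eq_bigl => a2.
apply/andP/agrP.
  case=> /agrP H1 /eqP <- e eU2; rewrite ffunE.
  case: ifP => eU1 //.
  by rewrite H1 // inE negb_or eU1.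
move=> H2; split.
  apply/agrP => e; rewrite inE negb_or => /andP[eU1 eU2].
  by rewrite H2 // Ha1.
apply/eqP/ffunP => e; rewrite ffunE; case: ifP => eU1.
  by rewrite H2 // (disjointFr dis eU1).
by rewrite Ha1 // eU1.
Qed.

Definition upd (a : A) (w : E) (b : 'I_(r w)) : A := @updf E (fun e => 'I_(r e)) a w b.
Arguments upd a w b : clear implicits.

Lemma upd_same (a : A) w (b : 'I_(r w)) : upd a w b w = b.
Proof. exact: updf_same. Qed.
Lemma upd_other (a : A) w (b : 'I_(r w)) e : e != w -> upd a w b e = a e.
Proof. exact: updf_other. Qed.
Lemma upd_id (a : A) w : upd a w (a w) = a.
Proof. exact: updf_id. Qed.

Lemma sum_agr1 w (F : A -> R) (a : A) :
  \sum_(a1 | agr [set w] a a1) F a1 = \sum_(b < r w) F (upd a w b).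
Proof.
rewrite (partition_big (fun a1 : A => a1 w) predT) //.
apply: eq_bigr => b _.
rewrite (big_pred1 (upd a w b)) // => a1 /=.
apply/andP/eqP.
  case=> /agrP H /eqP Hb; apply/ffunP => e.
  case: (eqVneq e w) => [->|ew]; first by rewrite /upd updf_same.
  by rewrite /upd updf_other // H // inE.
move=> ->; split; last by rewrite /upd updf_same.
by apply/agrP => e; rewrite inE => ew; rewrite /upd updf_other.
Qed.

Lemma agr_sub (U V : {set E}) (a a' : A) : U \subset V -> agr U a a' -> agr V a a'.
Proof.
move=> sUV /agrP H; apply/agrP => e eV; apply: H.
by apply: contra eV; apply: (subsetP sUV).
Qed.

End Asg.

Section LA.
Variables (F : fieldType) (X Y : finType) (k : nat).
Variables (P : X -> Y -> F) (U : X -> 'I_k -> F) (V : 'I_k -> Y -> F).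
Hypothesis HP : forall x y, P x y = \sum_(a < k) U x a * V a y.
Hypothesis Hrk : frank P = k.

Lemma sum_enum (G : X -> F) : \sum_(x : X) G x = \sum_(i < #|X|) G (enum_val i).
Proof. rewrite (reindex (@enum_val X (mem X))) //=; apply: onW_bij; exact: enum_val_bij. Qed.
Lemma sum_enumY (G : Y -> F) : \sum_(x : Y) G x = \sum_(i < #|Y|) G (enum_val i).
Proof. rewrite (reindex (@enum_val Y (mem Y))) //=; apply: onW_bij; exact: enum_val_bij. Qed.

Let UM := \matrix_(i < #|X|, a < k) U (enum_val i) a.
Let VM := \matrix_(a < k, j < #|Y|) V a (enum_val j).

Lemma PM_eq : \matrix_(i < #|X|, j < #|Y|) P (enum_val i) (enum_val j) = UM *m VM.
Proof. by apply/matrixP => i j; rewrite !mxE HP; apply: eq_bigr => a _; rewrite !mxE. Qed.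

Lemma left_inv : exists L : 'I_k -> X -> F,
  forall b b', \sum_(x : X) L b x * U x b' = (b == b')%:R.
Proof.
have : row_full UM.
  rewrite /row_full eqn_leq rank_leq_col /=.
  by rewrite -{1}Hrk /frank PM_eq mxrankM_maxl.
case/row_fullP => B HB.
exists (fun b x => B b (enum_rank x)) => b b'.
rewrite sum_enum.
have := congr1 (fun M : 'M[F]_k => M b b') HB; rewrite !mxE => <-.
by apply: eq_bigr => i _; rewrite enum_valK !mxE.
Qed.

Lemma right_inv : exists M : Y -> 'I_k -> F,
  forall b b', \sum_(y : Y) V b y * M y b' = (b == b')%:R.
Proof.
have : row_free VM.
  rewrite /row_free eqn_leq rank_leq_row /=.
  by rewrite -{1}Hrk /frank PM_eq mxrankM_maxr.
case/row_freeP => B HB.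
exists (fun y b => B (enum_rank y) b) => b b'.
rewrite sum_enumY.
have := congr1 (fun M : 'M[F]_k => M b b') HB; rewrite !mxE => <-.
by apply: eq_bigr => i _; rewrite enum_valK !mxE.
Qed.

Lemma inhabited_X : (0 < k)%N -> exists x : X, True.
Proof.
move=> k0; have : (0 < #|X|)%N.
  rewrite lt0n; apply/eqP => E; move: Hrk; rewrite /frank.
  move: (\matrix_(i < #|X|, j < #|Y|) P (enum_val i) (enum_val j)).
  rewrite E => M HM; have := rank_leq_row M; rewrite HM leqn0 => /eqP k00.
  by rewrite k00 in k0.
by case/card_gt0P => x _; exists x.
Qed.
End LA.

Unset Implicit Arguments.

Lemma sum_delta {R : comRingType} {k : nat} (F : 'I_k -> R) b :
  \sum_(b' < k) (b == b')%:R * F b' = F b.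
Proof.
rewrite (bigD1 b) //= eqxx mul1r big1 ?addr0 // => b' nb.
by rewrite eq_sym (negbTE nb) mul0r.
Qed.

Section Main.
Variables (R : realFieldType) (d : nat) (par : 'I_d -> option 'I_d) (root : 'I_d).
Variables (n : 'I_d -> nat) (r : edge par -> nat).
Local Notation X := {dffun forall i : 'I_d, 'I_(n i)}.
Local Notation A := {dffun forall e : edge par, 'I_(r e)}.
Local Notation E := (edge par).
Variables (p : X -> R) (Phi : forall e : E, X -> 'I_(r e) -> R)
  (Psi : forall e : E, 'I_(r e) -> X -> R).
Hypothesis HPhi : forall (e : E) (x y : X),
  (forall i, i \in sval e |: desc par (sval e) -> x i = y i) -> forall a, Phi e x a = Phi e y a.
Hypothesis HPsi : forall (e : E) (x y : X),
  (forall i, i \in nondesc par (sval e) -> x i = y i) -> forall a, Psi e a x = Psi e a y.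
Hypothesis Hdec : forall (e : E) x, p x = \sum_(a < r e) Phi e x a * Psi e a x.
Variables (Lf : forall e : E, 'I_(r e) -> X -> R) (Mf : forall e : E, X -> 'I_(r e) -> R).
Hypothesis HL : forall e b b', \sum_(y : X) Lf e b y * Phi e y b' = (b == b')%:R.
Hypothesis HM : forall e b b', \sum_(y : X) Psi e b y * Mf e y b' = (b == b')%:R.

Local Notation SE e := (S par (sval e)).

Lemma mergeE (U : {set 'I_d}) (x y : X) i : asg_merge U x y i = if i \in U then x i else y i.
Proof. by rewrite ffunE. Qed.

Lemma Phi_dep (e : E) (x y : X) : (forall i, i \in SE e -> x i = y i) -> forall a, Phi e x a = Phi e y a.
Proof. exact: HPhi. Qed.

Lemma Psi_dep (e : E) (x y : X) : (forall i, i \notin SE e -> x i = y i) -> forall a, Psi e a x = Psi e a y.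
Proof. by move=> H; apply: HPsi => i; rewrite inE => /H. Qed.

Definition fixedw (w : E) (f : A -> X -> R) := forall a x,
  f a x = \sum_(b < r w) Phi w x b * \sum_(y : X) Lf w b y * f a (asg_merge (SE w) y x).

Lemma fix_of_span w (f : A -> X -> R) (c : A -> 'I_(r w) -> X -> R) :
  (forall a b (x x' : X), (forall i, i \notin SE w -> x i = x' i) -> c a b x = c a b x') ->
  (forall a x, f a x = \sum_(b < r w) Phi w x b * c a b x) -> fixedw w f.
Proof.
move=> Hc Hf a x; rewrite {1}Hf; apply: eq_bigr => b _; congr (_ * _); symmetry.
transitivity (\sum_(y : X) \sum_(b' < r w) Lf w b y * Phi w y b' * c a b' x).
  apply: eq_bigr => y _; rewrite Hf mulr_sumr; apply: eq_bigr => b' _.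
  rewrite mulrA; congr (_ * _ * _).
  - by apply: Phi_dep => i iS; rewrite mergeE iS.
  - by apply: Hc => i iS; rewrite mergeE (negbTE iS).
rewrite exchange_big /= -(sum_delta (fun b' => c a b' x) b).
by apply: eq_bigr => b' _; rewrite -mulr_suml HL.
Qed.

Lemma p_fixed w : fixedw w (fun _ x => p x).
Proof.
apply: (@fix_of_span w _ (fun _ b x => Psi w b x)) => //.
by move=> a b x x' H; apply: Psi_dep.
Qed.

Lemma phi_expand (ek : E) x b :
  Phi ek x b = \sum_(y : X) p (asg_merge (SE ek) x y) * Mf ek y b.
Proof.
transitivity (\sum_(c < r ek) Phi ek x c * \sum_(y : X) Psi ek c y * Mf ek y b); last first.
  under eq_bigr => c _ do rewrite mulr_sumr.
  rewrite exchange_big /=; apply: eq_bigr => y _; rewrite (Hdec ek) mulr_suml.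
  apply: eq_bigr => c _; rewrite mulrA; congr (_ * _ * _).
  - by apply: Phi_dep => i iS; rewrite mergeE iS.
  - by apply: Psi_dep => i iS; rewrite mergeE (negbTE iS).
under eq_bigr => c _ do rewrite HM.
by rewrite -(sum_delta (fun c => Phi ek x c) b); apply: eq_bigr => c _; rewrite mulrC eq_sym.
Qed.

Lemma phi_fixed (ek w : E) : (forall i, i \in SE w -> i \in SE ek) ->
  fixedw w (fun a x => Phi ek x (a ek)).
Proof.
move=> sub.
apply: (@fix_of_span w _ (fun a b x => \sum_(y : X) Psi w b (asg_merge (SE ek) x y) * Mf ek y (a ek))).
  move=> a b x x' H; apply: eq_bigr => y _; congr (_ * _).
  apply: Psi_dep => i iS; rewrite !mergeE; case: ifP => // _; exact: H.
move=> a x; rewrite phi_expand.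
under eq_bigr => y _ do rewrite (Hdec w) mulr_suml.
rewrite exchange_big /=; apply: eq_bigr => b _; rewrite mulr_sumr; apply: eq_bigr => y _.
rewrite mulrA; congr (_ * _ * _).
by apply: Phi_dep => i iS; rewrite mergeE sub.
Qed.

Definition disj (W : {set E}) := forall w w', w \in W -> w' \in W -> w != w' ->
  forall i, i \in SE w -> i \notin SE w'.

Lemma merge_comm (U V : {set 'I_d}) (y y' x : X) : (forall i, i \in U -> i \notin V) ->
  asg_merge V y' (asg_merge U y x) = asg_merge U y (asg_merge V y' x).
Proof.
move=> H; apply/ffunP => i; rewrite !mergeE.
case: ifP => iV; case: ifP => iU //.
by have := H i iU; rewrite iV.
Qed.

Lemma sum_peel w (W' : {set E}) (x : X) (F : A -> R) (a : A) : w \notin W' ->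
  \sum_(a' | agr (w |: W') a a') (\prod_(v in w |: W') Phi v x (a' v)) * F a' =
  \sum_(b < r w) Phi w x b *
     \sum_(a' | agr W' (upd a b) a') (\prod_(v in W') Phi v x (a' v)) * F a'.
Proof.
move=> wW'.
rewrite sum_agrU; last by rewrite disjoints1.
rewrite sum_agr1; apply: eq_bigr => b _; rewrite mulr_sumr; apply: eq_bigr => a' Ha'.
rewrite big_setU1 //= mulrA; congr (_ * _ * _).
by move/agrP: Ha' => ->; rewrite ?upd_same.
Qed.

Lemma decomp m : forall (W : {set E}), #|W| = m -> disj W ->
  forall (f : A -> X -> R) (D : {set 'I_d}) (E0 : {set E}),
  [disjoint E0 & W] -> (forall w, w \in W -> fixedw w f) ->
  (forall a (x x' : X), (forall i, i \in D -> x i = x' i) -> f a x = f a x') ->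
  (forall (a a' : A) x, (forall e, e \in E0 -> a e = a' e) -> f a x = f a' x) ->
  exists H : A -> X -> R,
   [/\ forall a (x x' : X), (forall i, i \in D -> (forall w, w \in W -> i \notin SE w) -> x i = x' i) -> H a x = H a x',
       forall (a a' : A) x, (forall e, e \in E0 :|: W -> a e = a' e) -> H a x = H a' x &
       forall a x, f a x = \sum_(a' | agr W a a') (\prod_(w in W) Phi w x (a' w)) * H a' x].
Proof.
elim: m => [|m IH] W cW dW f D E0 dE fW fD fE.
  have W0 : W = set0 by apply/eqP; rewrite -cards_eq0 cW.
  subst W; exists f; split.
  - move=> a x x' H; apply: fD => i iD; apply: H => // w; by rewrite inE.
  - move=> a a' x H; apply: fE => e eE; apply: H; by rewrite inE eE.
  - by move=> a x; rewrite sum_agr0 big_set0 mul1r.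
have [w wW] : exists w, w \in W by apply/card_gt0P; rewrite cW.
have [W' [eW wW' cW']] : exists W', [/\ W = w |: W', w \notin W' & #|W'| = m].
  exists (W :\ w); split; [by rewrite setD1K | by rewrite setD11 | ].
  by move: cW; rewrite (cardsD1 w W) wW add1n => -[].
subst W.
have dW' : disj W'.
  by move=> u u' uW u'W; apply: dW; rewrite !inE ?uW ?u'W orbT.
pose g (a : A) (x : X) := \sum_(y : X) Lf w (a w) y * f a (asg_merge (SE w) y x).
have wE0 : w \notin E0 by rewrite (disjointFl dE) // setU11.
have := IH W' cW' dW' g (D :\: SE w) (w |: E0).
case.
- apply/disjP => e; rewrite !inE => /orP[/eqP->|eE0] eW'; first by rewrite eW' in wW'.
  by apply: (disjP _ _ dE) eE0 _; rewrite !inE eW' orbT.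
- move=> w' w'W' a x.
  have w'W : w' \in w |: W' by rewrite !inE w'W' orbT.
  have ww' : w != w' by apply: contraNneq wW' => ->.
  have dis1 : forall i, i \in SE w -> i \notin SE w' by apply: dW => //; rewrite setU11.
  have dis2 : forall i, i \in SE w' -> i \notin SE w by apply: dW => //; rewrite ?setU11 // eq_sym.
  transitivity (\sum_(b < r w') \sum_(y' : X) \sum_(y : X) Phi w' x b * (Lf w' b y' *
     (Lf w (a w) y * f a (asg_merge (SE w) y (asg_merge (SE w') y' x))))).
    rewrite /g; under eq_bigr => y _ do rewrite (fW w' w'W a) mulr_sumr.
    rewrite exchange_big /=; apply: eq_bigr => b _.
    rewrite [RHS]exchange_big /=; apply: eq_bigr => y _.
    rewrite !mulr_sumr; apply: eq_bigr => y' _.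
    rewrite (@merge_comm (SE w) (SE w') y y' x dis1) (@Phi_dep w' _ x); first by ring.
    by move=> i iS; rewrite mergeE (negbTE (dis2 _ iS)).
  apply: eq_bigr => b _; rewrite mulr_sumr; apply: eq_bigr => y' _.
  by rewrite /g !mulr_sumr.
- move=> a x x' H; apply: eq_bigr => y _; congr (_ * _); apply: fD => i iD.
  rewrite !mergeE; case: ifP => // iS; apply: H; by rewrite inE iS iD.
- move=> a a' x H; rewrite /g (H w) ?setU11 //; apply: eq_bigr => y _; congr (_ * _).
  by apply: fE => e eE0; apply: H; rewrite !inE eE0 orbT.
move=> H [H1 H2 H3]; exists H; split.
- move=> a x x' Hx; apply: H1 => i; rewrite inE => /andP[iS iD] iW'; apply: Hx => // v.
  by move=> /setU1P[->//|]; exact: iW'.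
- move=> a a' x Ha; apply: H2 => e; rewrite !inE => He; apply: Ha.
  by move: He; rewrite !inE; case/orP=> [/orP[->|->]|->]; rewrite ?orbT.
- move=> a x; rewrite sum_peel // (fW w (setU11 _ _) a x).
  apply: eq_bigr => b _; congr (_ * _); rewrite -H3 /g upd_same.
  apply: eq_bigr => y _; congr (_ * _); apply: fE => e eE0.
  by rewrite upd_other //; apply: contraNneq wE0 => <-.
Qed.

Lemma urank (x0 : X) m : forall (W : {set E}), #|W| = m -> disj W -> forall c : A -> R,
  (forall a x, \sum_(a' | agr W a a') (\prod_(w in W) Phi w x (a' w)) * c a' = 0) ->
  forall a, c a = 0.
Proof.
elim: m => [|m IH] W cW dW c Hc.
  have W0 : W = set0 by apply/eqP; rewrite -cards_eq0 cW.
  subst W; move=> a; have := Hc a x0; by rewrite sum_agr0 big_set0 mul1r.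
have [w wW] : exists w, w \in W by apply/card_gt0P; rewrite cW.
have [W' [eW wW' cW']] : exists W', [/\ W = w |: W', w \notin W' & #|W'| = m].
  exists (W :\ w); split; [by rewrite setD1K | by rewrite setD11 | ].
  by move: cW; rewrite (cardsD1 w W) wW add1n => -[].
subst W.
have dW' : disj W'.
  by move=> u u' uW u'W; apply: dW; rewrite !inE ?uW ?u'W orbT.
pose T (a1 : A) (x : X) := \sum_(a' | agr W' a1 a') (\prod_(v in W') Phi v x (a' v)) * c a'.
have Hc' : forall a x, \sum_(b < r w) Phi w x b * T (upd a b) x = 0.
  by move=> a x; rewrite -sum_peel.
have Tdep : forall a1 y x, T a1 (asg_merge (SE w) y x) = T a1 x.
  move=> a1 y x; apply: eq_bigr => a' _; congr (_ * _); apply: eq_bigr => v vW'.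
  apply: Phi_dep => i iS; rewrite mergeE.
  have -> // : (i \in SE w) = false.
  have vW : v \in w |: W' by rewrite !inE vW' orbT.
  apply: negbTE; apply: (dW v w) => //; rewrite ?setU11 //.
  by apply: contraNneq wW' => <-.
apply: (IH W' cW' dW' c) => a1 x.
change (T a1 x = 0).
have -> : T a1 x = \sum_(b < r w) (a1 w == b)%:R * T (upd a1 b) x.
  by rewrite sum_delta upd_id.
transitivity (\sum_(y : X) Lf w (a1 w) y *
   (\sum_(b < r w) Phi w (asg_merge (SE w) y x) b * T (upd a1 b) (asg_merge (SE w) y x))); last first.
  by rewrite big1 // => y _; rewrite Hc' mulr0.
under [RHS]eq_bigr => y _ do rewrite mulr_sumr.
rewrite [RHS]exchange_big /=; apply: eq_bigr => b _.
rewrite -HL mulr_suml; apply: eq_bigr => y _; rewrite Tdep -mulrA; congr (_ * (_ * _)).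
by apply: Phi_dep => i iS; rewrite mergeE iS.
Qed.

Variable h : 'I_d -> nat.
Hypothesis Hroot : par root = None.
Hypothesis Hpar : forall v, v != root -> par v != None.
Hypothesis Hh : forall v u, par v = Some u -> (h u < h v)%N.

Definition childE (k : 'I_d) : {set E} := [set e : E | par (sval e) == Some k].

Lemma agree_offE k (a a' : A) : agree_off k a a' = agr (childE k) a a'.
Proof. by rewrite /agree_off /agr; apply: eq_forallb => e; rewrite inE. Qed.

Lemma contractE k (Gk : 'I_(n k) -> A -> R) x a :
  contract Phi Gk x a =
  \sum_(a' | agr (childE k) a a') (\prod_(e in childE k) Phi e x (a' e)) * Gk (x k) a'.
Proof.
rewrite /contract; apply: eq_big => [a'|a' _]; first exact: agree_offE.
by congr (_ * _); apply: eq_bigl => e; rewrite inE.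
Qed.

Lemma childE_par k (e : E) : e \in childE k -> par (sval e) = Some k.
Proof. by rewrite inE => /eqP. Qed.

Lemma disj_child k : disj (childE k).
Proof.
move=> w w' /childE_par pw /childE_par pw' ww' i iw; apply/negP => iw'.
by move: ww'; rewrite (val_inj (sib_disj Hh pw pw' iw iw')) eqxx.
Qed.

Lemma child_in_desc k (e : E) i : e \in childE k -> i \in SE e -> i \in desc par k.
Proof. by move=> /childE_par pe; apply: (child_sub Hh pe). Qed.

Lemma k_notin_child k (e : E) : e \in childE k -> k \notin SE e.
Proof. by move=> /childE_par pe; apply: (par_notin Hh pe). Qed.

Lemma phi_upE k (Hk : par k != None) x a :
  phi_up Phi k x a = Phi (Sub k Hk) x (a (Sub k Hk)).
Proof. by rewrite /phi_up (insubT (fun w => par w != None) Hk). Qed.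

Definition updX (x : X) k (v : 'I_(n k)) : X := @updf 'I_d (fun i => 'I_(n i)) x k v.
Lemma updX_same x k v : updX x k v k = v.
Proof. exact: updf_same. Qed.
Lemma updX_other x k v i : i != k -> updX x k v i = x i.
Proof. exact: updf_other. Qed.

Lemma only_k k (i : 'I_d) : i \in S par k ->
  (forall w, w \in childE k -> i \notin SE w) -> i = k.
Proof.
move=> /setU1P[->//|/(desc_child Hh) [w [pw iw]]] H.
have Hw : par w != None by rewrite pw.
by have := H (Sub w Hw); rewrite inE /= pw eqxx iw => /(_ isT).
Qed.

Lemma in_S_root (i : 'I_d) : i \in S par root.
Proof.
case: (eqVneq i root) => [->|ir]; first exact: setU11.
by rewrite in_setU1; apply/orP; right; apply/(in_desc Hh); exact: (reach_root Hpar Hh ir).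
Qed.

Lemma core_exists (x0 : X) k : exists Gk : 'I_(n k) -> A -> R,
  core_dep Gk /\ CDE root p Phi Gk.
Proof.
case: (eqVneq k root) => [kr|kr].
- subst k.
  have := @decomp _ (childE root) erefl (disj_child root) (fun _ x => p x) setT set0.
  case.
  + by apply/disjP => e; rewrite inE.
  + by move=> w _; exact: p_fixed.
  + by move=> a x x' Hx; congr p; apply/ffunP => i; apply: Hx; rewrite inE.
  + by [].
  move=> H [H1 H2 H3].
  exists (fun xk a => H a (updX x0 root xk)); split.
  + move=> xk a a' Ha; apply: H2 => e; rewrite in_setU in_set0 /= => eC; apply: Ha.
    by rewrite (childE_par _ _ eC) eqxx orbT.
  + rewrite /CDE eqxx => x a; rewrite contractE (H3 a x); apply: eq_bigr => a' _.
    congr (_ * _); apply: H1 => i _ Hi.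
    by rewrite (only_k _ _ (in_S_root i) Hi) updX_same.
- have Hk : par k != None := Hpar k kr.
  pose ek : E := Sub k Hk.
  case: (boolP (is_leaf par k)) => leaf.
  + exists (fun xk a => Phi ek (updX x0 k xk) (a ek)); split.
    * by move=> xk a a' Ha; rewrite (Ha ek) //= eqxx.
    * rewrite /CDE (negbTE kr) leaf => x a; rewrite phi_upE.
      apply: Phi_dep => i /setU1P[->|]; first by rewrite updX_same.
      move/(desc_child Hh) => [w [pw _]].
      by move/eqP: leaf => /setP/(_ w); rewrite !inE pw eqxx.
  + have := @decomp _ (childE k) erefl (disj_child k) (fun a x => Phi ek x (a ek))
       (S par k) [set ek].
    case.
    * rewrite disjoints1 inE /=; apply/negP => /eqP pk.
      by have := par_neq Hh pk; rewrite eqxx.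
    * move=> w wC; apply: phi_fixed => i iS.
      by rewrite /= in_setU1 (child_in_desc _ _ _ wC iS) orbT.
    * by move=> a x x' Hx; apply: Phi_dep => i iS; apply: Hx.
    * by move=> a a' x Ha; rewrite (Ha ek) ?set11.
    move=> H [H1 H2 H3].
    exists (fun xk a => H a (updX x0 k xk)); split.
    * move=> xk a a' Ha; apply: H2 => e; rewrite in_setU => /orP[/set1P ->|eC]; apply: Ha.
        by rewrite /= eqxx.
      by rewrite (childE_par _ _ eC) eqxx orbT.
    * rewrite /CDE (negbTE kr) (negbTE leaf) => x a; rewrite contractE phi_upE.
      have := H3 a x; rewrite /= => ->; apply: eq_bigr => a' _.
      congr (_ * _); apply: H1 => i iS Hi.
      by rewrite (only_k _ _ iS Hi) updX_same.
Qed.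

Lemma core_unique (x0 : X) k (G1 G2 : 'I_(n k) -> A -> R) :
  CDE root p Phi G1 -> CDE root p Phi G2 -> forall xk a, G1 xk a = G2 xk a.
Proof.
move=> C1 C2 xk a.
have key : (forall x a, contract Phi G1 x a = contract Phi G2 x a) -> G1 xk a = G2 xk a.
  move=> Hc; apply/eqP; rewrite -subr_eq0; apply/eqP.
  apply: (@urank x0 _ (childE k) erefl (disj_child k) (fun a' => G1 xk a' - G2 xk a')) => a1 x.
  have := Hc (updX x k xk) a1; rewrite !contractE updX_same => /eqP.
  rewrite -subr_eq0 -sumrB => /eqP E0; rewrite -[RHS]E0.
  apply: eq_bigr => a' _; rewrite -mulrBr; congr (_ * _); apply: eq_bigr => e eC.
  apply: Phi_dep => i iS; rewrite updX_other //.
  by apply: contraTneq iS => ->; apply: k_notin_child.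
case: (eqVneq k root) => [kr|kr].
  subst k; apply: key => x a'; move: C1 C2; rewrite /CDE eqxx => C1 C2; by rewrite C1 C2.
case: (boolP (is_leaf par k)) => leaf.
  move: C1 C2; rewrite /CDE (negbTE kr) leaf => C1 C2.
  by have := C1 (updX x0 k xk) a; have := C2 (updX x0 k xk) a; rewrite !updX_same => -> ->.
apply: key => x a'; move: C1 C2; rewrite /CDE (negbTE kr) (negbTE leaf) => C1 C2.
by rewrite C1 C2.
Qed.

Lemma prod_setUD (F : E -> R) (U V : {set E}) : [disjoint U & V] ->
  \prod_(e in U :|: V) F e = (\prod_(e in U) F e) * \prod_(e in V) F e.
Proof. by move=> dis; rewrite -bigU //; apply: eq_bigl => e; rewrite !inE. Qed.

Lemma cde_unified v (Hv : par v != None) (Gv : 'I_(n v) -> A -> R) : v != root ->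
  CDE root p Phi Gv -> forall (x : X) (a : A), Phi (Sub v Hv) x (a (Sub v Hv)) =
  \sum_(c | agr (childE v) a c) (\prod_(e in childE v) Phi e x (c e)) * Gv (x v) c.
Proof.
move=> vr C x a; rewrite -phi_upE; move: C; rewrite /CDE (negbTE vr).
case: ifP => leaf C.
  have C0 : childE v = set0.
    apply/setP => e; rewrite inE in_set0; apply/negP => /eqP pe.
    by move/eqP: leaf => /setP/(_ (sval e)); rewrite !inE pe eqxx.
  by rewrite C0 sum_agr0 big_set0 mul1r C.
by rewrite -C contractE.
Qed.

Lemma cde_root (Gr : 'I_(n root) -> A -> R) : CDE root p Phi Gr -> forall (x : X) (a : A),
  p x = \sum_(c | agr (childE root) a c) (\prod_(e in childE root) Phi e x (c e)) * Gr (x root) c.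
Proof. by rewrite /CDE eqxx => C x a; rewrite -(C x a) contractE. Qed.

Section TT.
Variable G : forall k, 'I_(n k) -> A -> R.
Hypothesis GD : forall k, core_dep (G k).
Hypothesis GC : forall k, CDE root p Phi (G k).

Definition pin (K : {set 'I_d}) (e : E) : bool :=
  if par (sval e) is Some u then u \in K else false.
Definition EK K := [set e : E | pin K e].
Definition FK K := [set e : E | pin K e && (sval e \notin K)].
Definition Valid (K : {set 'I_d}) := root \in K /\ forall v u, v \in K -> par v = Some u -> u \in K.
Definition Inv K := forall x a, p x = \sum_(a' | agr (EK K) a a')
   (\prod_(k in K) G k (x k) a') * \prod_(e in FK K) Phi e x (a' e).

Lemma inv_root : Inv [set root].
Proof.
have E1 : EK [set root] = childE root.
  by apply/setP => e; rewrite !inE /pin; case: (par (sval e)) => [u|] //=; rewrite inE.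
have E2 : FK [set root] = childE root.
  apply/setP => e; rewrite !inE /pin; case E: (par (sval e)) => [u|] //=; rewrite !inE.
  have -> : sval e != root by apply/eqP => er; rewrite er Hroot in E.
  by rewrite andbT.
move=> x a; rewrite E1 E2 (cde_root _ (GC root) x a); apply: eq_bigr => c _.
by rewrite big_set1 mulrC.
Qed.

Lemma inv_step K v u : Valid K -> Inv K -> v \notin K -> u \in K -> par v = Some u ->
  Inv (v |: K).
Proof.
move=> [rK cK] IK vK uK pv x a.
have Hv : par v != None by rewrite pv.
have vr : v != root by apply: contraNneq vK => ->.
pose ev : E := Sub v Hv.
have evF : ev \in FK K by rewrite inE /pin /= pv uK vK.
have cv : forall e : E, e \in childE v -> (sval e \notin K) && (sval e != v).
  move=> e /(childE_par _ _) pe; apply/andP; split.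
    by apply: contra vK => eK; apply: (cK _ _ eK pe).
  exact: (par_neq Hh pe).
have EK' : EK (v |: K) = EK K :|: childE v.
  apply/setP => e; rewrite !inE /pin; case: (par (sval e)) => [u'|] //=.
  by rewrite !inE orbC.
have FK' : FK (v |: K) = (FK K :\ ev) :|: childE v.
  apply/setP => e; rewrite !inE /pin; case E1: (par (sval e)) => [u'|] //=.
  case: (eqVneq u' v) => [uv|uv].
    subst u'; have eC : e \in childE v by rewrite inE E1.
    by rewrite setU11 negb_or eqxx orbT; case/andP: (cv e eC) => -> ->.
  have -> : (Some u' == Some v) = false by apply/eqP => -[]; apply/eqP.
  rewrite orbF in_setU1 (negbTE uv) /=.
  have -> : (e != ev) = (sval e != v) by rewrite -(inj_eq val_inj).
  by case: (u' \in K); case: (sval e \in K); case: (sval e == v).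
  by rewrite andbF.
have dis1 : [disjoint EK K & childE v].
  apply/disjP => e; rewrite !inE /pin => + /eqP pe; rewrite pe.
  by rewrite (negbTE vK).
have dis2 : [disjoint FK K :\ ev & childE v].
  apply/disjP => e; rewrite !inE /pin => /andP[_ /andP[+ _]] /eqP pe; rewrite pe.
  by rewrite (negbTE vK).
rewrite (IK x a) EK' sum_agrU //.
apply: eq_bigr => a' Ha'.
rewrite (big_setD1 ev evF) /= (cde_unified v Hv _ vr (GC v) x a') mulr_suml mulr_sumr.
apply: eq_bigr => c /agrP Hc.
rewrite big_setU1 //= FK' prod_setUD //.
have PK : \prod_(k in K) G k (x k) a' = \prod_(k in K) G k (x k) c.
  apply: eq_bigr => k kK; apply: GD => e He; rewrite Hc //.
  apply/negP => /(childE_par _ _) pe; move: He => /orP[/eqP ek|/eqP pk].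
    by move: vK; rewrite -ek in kK; rewrite (cK _ _ kK pe).
  by move: pk; rewrite pe => -[vk]; move: vK; rewrite vk kK.
have PF : \prod_(e in FK K :\ ev) Phi e x (a' e) = \prod_(e in FK K :\ ev) Phi e x (c e).
  apply: eq_bigr => e eF; rewrite Hc //; apply/negP => eC.
  by move: dis2 => /disjP/(_ e eF eC).
rewrite PK PF; ring.
Qed.

Lemma inv_all : Inv setT.
Proof.
have Q : forall j, exists K, [/\ Valid K, Inv K & (minn j d <= #|K|)%N].
  elim=> [|j [K [VK IK cK]]].
    exists [set root]; split => //; last by rewrite min0n.
    - split; first exact: set11.
      by move=> v u /set1P -> ; rewrite Hroot.
    - exact: inv_root.
  case: (boolP [forall i, i \in K]) => [/forallP allK|].
    exists K; split => //.
    have -> : K = setT by apply/setP => i; rewrite inE allK.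
    by rewrite cardsT card_ord geq_minr.
  rewrite negb_forall => /existsP [u uK].
  case: VK => rK cKK.
  have [v [w [vK wK pv]]] := frontier Hpar Hh rK uK.
  exists (v |: K); split.
  - split; first by rewrite in_setU1 rK orbT.
    move=> v' u' /setU1P[->|v'K] pv'.
      by rewrite pv in pv'; case: pv' => <-; rewrite in_setU1 wK orbT.
    by rewrite in_setU1 (cKK _ _ v'K pv') orbT.
  - exact: (inv_step K v w (conj rK cKK) IK vK wK pv).
  - rewrite cardsU1 vK add1n.
    by move: cK; rewrite -!subn_eq0 !minnE; case: (leqP d j) => _; case: (leqP d j.+1) => *; lia.
have [K [_ IK cK]] := Q d.
have KT : K = setT.
  apply/eqP; rewrite eqEcard subsetT cardsT card_ord.
  by move: cK; rewrite minnn.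
by rewrite -KT.
Qed.

Lemma ttns (a0 : A) x : p x = \sum_(a : A) \prod_(k < d) G k (x k) a.
Proof.
rewrite (inv_all x a0).
have E1 : EK setT = setT.
  apply/setP => e; rewrite !inE /pin; case E: (par (sval e)) => [u|] /=; first by rewrite inE.
  by move: (valP e); rewrite E.
have E2 : FK setT = set0.
  apply/setP => e; rewrite !inE /pin; case: (par (sval e)) => [u|] //=.
  by rewrite inE andbF.
rewrite E1 E2; apply: eq_big => [a'|a' _]; first exact: agrT.
by rewrite big_set0 mulr1; apply: eq_bigl => k; rewrite inE.
Qed.

End TT.

Hypothesis Hr : forall e : E, (0 < r e)%N.
Hypothesis Hrank : forall e : E,
  frank (fun x y : X => p (asg_merge (sval e |: desc par (sval e)) x y)) = r e.

Lemma point k (xk : 'I_(n k)) : exists x : X, True.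
Proof.
case: (pickP (fun e : E => true)) => [e _|noE].
  have HP : forall x y : X, p (asg_merge (sval e |: desc par (sval e)) x y) =
     \sum_(a < r e) Phi e x a * Psi e a y.
    move=> x y; rewrite (Hdec e); apply: eq_bigr => b _; congr (_ * _).
    - by apply: Phi_dep => i iS; rewrite mergeE iS.
    - by apply: Psi_dep => i iS; rewrite mergeE (negbTE iS).
  exact: (@inhabited_X R X X (r e) (fun x y : X => p (asg_merge (sval e |: desc par (sval e)) x y)) (Hrank e) (Hr e)).
have allr : forall i, i = root.
  move=> i; apply/eqP; apply/negPn/negP => ir.
  by have := noE (Sub i (Hpar i ir)).
have pos : forall i, (0 < n i)%N.
  by move=> i; rewrite (allr i) -(allr k); apply: (leq_ltn_trans _ (ltn_ord xk)).
by exists (@finfun _ (fun i => 'I_(n i)) (fun i => Ordinal (pos i))).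
Qed.

Lemma main_lemma : exists G : forall k : 'I_d, 'I_(n k) -> A -> R,
    (forall k : 'I_d,
       [/\ core_dep (G k), CDE root p Phi (G k) &
           forall G' : 'I_(n k) -> A -> R,
             core_dep G' -> CDE root p Phi G' ->
             forall xk a, G' xk a = G k xk a]) /\
    (forall x, p x = \sum_(a : A) \prod_(k < d) G k (x k) a).
Proof.
case: (pickP (fun _ : X => true)) => [x0 _|X0]; last first.
  exists (fun _ _ _ => 0); split.
    move=> k; split.
    - by [].
    - rewrite /CDE; case: ifP => _; last case: ifP => _; by move=> x; have := X0 x.
    - move=> G' _ _ xk; have [x _] := point k xk; by have := X0 x.
  by move=> x; have := X0 x.
pose G k := sval (constructive_indefinite_description _ (core_exists x0 k)).
have GP : forall k, core_dep (G k) /\ CDE root p Phi (G k).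
  by move=> k; rewrite /G; case: constructive_indefinite_description.
exists G; split.
  move=> k; case: (GP k) => D C; split => // G' _ C' xk a.
  exact: (core_unique x0 k G' (G k) C' C).
pose a0 : A := @finfun _ (fun e => 'I_(r e)) (fun e => Ordinal (Hr e)).
move=> x; apply: (ttns G _ _ a0 x) => k; by case: (GP k).
Qed.

End Main.

Theorem theorem1 (R : realFieldType) (d : nat) (par : 'I_d -> option 'I_d)
  (root : 'I_d) (n : 'I_d -> nat) (r : edge par -> nat)
  (p : {dffun forall i : 'I_d, 'I_(n i)} -> R)
  (Phi : forall e : edge par, {dffun forall i : 'I_d, 'I_(n i)} -> 'I_(r e) -> R)
  (Psi : forall e : edge par, 'I_(r e) -> {dffun forall i : 'I_d, 'I_(n i)} -> R) :
  is_rooted_tree par root ->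
  (forall e : edge par, (0 < r e)%N) ->
  (forall (e : edge par) (x y : {dffun forall i : 'I_d, 'I_(n i)}),
     (forall i, i \in sval e |: desc par (sval e) -> x i = y i) ->
     forall a, Phi e x a = Phi e y a) ->
  (forall (e : edge par) (x y : {dffun forall i : 'I_d, 'I_(n i)}),
     (forall i, i \in nondesc par (sval e) -> x i = y i) ->
     forall a, Psi e a x = Psi e a y) ->
  (forall (e : edge par) x, p x = \sum_(a < r e) Phi e x a * Psi e a x) ->
  (forall e : edge par,
     frank (fun x y : {dffun forall i : 'I_d, 'I_(n i)} =>
              p (asg_merge (sval e |: desc par (sval e)) x y)) = r e) ->
  exists G : forall k : 'I_d, 'I_(n k) -> {dffun forall e : edge par, 'I_(r e)} -> R,
    (forall k : 'I_d,
       [/\ core_dep (G k), CDE root p Phi (G k) &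
           forall G' : 'I_(n k) -> {dffun forall e : edge par, 'I_(r e)} -> R,
             core_dep G' -> CDE root p Phi G' ->
             forall xk a, G' xk a = G k xk a]) /\
    (forall x, p x = \sum_(a : {dffun forall e : edge par, 'I_(r e)})
                       \prod_(k < d) G k (x k) a).
Proof.
move=> [Hroot [Hpar [h Hh]]] Hr HPhi HPsi Hdec Hrank.
have HP : forall (e : edge par) (x y : {dffun forall i : 'I_d, 'I_(n i)}),
    p (asg_merge (sval e |: desc par (sval e)) x y) = \sum_(a < r e) Phi e x a * Psi e a y.
  move=> e x y; rewrite (Hdec e); apply: eq_bigr => b _; congr (_ * _).
  - by apply: HPhi => i iS; rewrite ffunE iS.
  - by apply: HPsi => i; rewrite inE => iS; rewrite ffunE (negbTE iS).
have exL : forall e : edge par, exists L : 'I_(r e) -> {dffun forall i : 'I_d, 'I_(n i)} -> R,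
    forall b b', \sum_y L b y * Phi e y b' = (b == b')%:R.
  by move=> e; apply: (left_inv (HP e) (Hrank e)).
have exM : forall e : edge par, exists M : {dffun forall i : 'I_d, 'I_(n i)} -> 'I_(r e) -> R,
    forall b b', \sum_y Psi e b y * M y b' = (b == b')%:R.
  by move=> e; apply: (right_inv (HP e) (Hrank e)).
pose Lf e := sval (constructive_indefinite_description _ (exL e)).
pose Mf e := sval (constructive_indefinite_description _ (exM e)).
have HL : forall e b b', \sum_y Lf e b y * Phi e y b' = (b == b')%:R.
  by move=> e; rewrite /Lf; case: constructive_indefinite_description.
have HM : forall e b b', \sum_y Psi e b y * Mf e y b' = (b == b')%:R.
  by move=> e; rewrite /Mf; case: constructive_indefinite_description.
exact: (@main_lemma R d par root n r p Phi Psi HPhi HPsi Hdec Lf Mf HL HM h Hroot Hpar Hh Hr Hrank).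
Qed.
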